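(* Let $G_n(\lambda)=\binom{n}{\lambda}\mathbb P(\sigma(\omega)\in\mathcal T_\lambda)$ for $\lambda\vdash n$. Then \[ Z_n(\beta)\asymp\sum_{\lambda\vdash n}G_n(\lambda), \] and \[ e^{(h/\theta)n}Z_n(\beta,h)\asymp\begin{cases}\sum_{\lambda\vdash n}e^{h\lambda_1}G_n(\lambda),&h>0,\\ \sum_{\lambda\vdash n}e^{h\lambda_\theta}G_n(\lambda),&h<0.\end{cases} \]
   Context: Fix $\theta\in\{2,3,\dots\}$, $\beta>0$, $h\in\mathbb R$. Let $V=\{1,\dots,n\}$, $E$ the set of unordered pairs of distinct elements of $V$. Under $\mathbb P$ (expectation $\mathbb E$), let $\omega=(\omega_{xy}:xy\in E)$ be independent rate-1 Poisson point processes on $[0,\beta/n]$, and $\sigma(\omega)\in\mathcal S_n$ the time-ordered composition of the transpositions $(x,y)$ over all points $t\in\omega_{xy}$. $\mathcal C(\omega)$ is the set of cycles of $\sigma(\omega)$ (including fixed points), $\ell(\omega)=|\mathcal C(\omega)|$, $|\gamma|$ the size of a cycle. $Z_n(\beta)=\mathbb E[\theta^{\ell(\omega)}]$ and $Z_n(\beta,h)=e^{-(h/\theta)n}\mathbb E\big[\prod_{\gamma\in\mathcal C(\omega)}(e^{h|\gamma|}+\theta-1)\big]$. A partition $\lambda\vdash n$ here means $\lambda=(\lambda_1,\dots,\lambda_\theta)$ of nonnegative integers with $\lambda_1\ge\dots\ge\lambda_\theta$ and $\sum\lambda_j=n$; $\binom{n}{\lambda}=n!/(\lambda_1!\cdots\lambda_\theta!)$;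 $\mathcal T_\lambda$ is the Young subgroup of permutations fixing each of the sets $\{1,\dots,\lambda_1\}$, $\{\lambda_1+1,\dots,\lambda_1+\lambda_2\}$, etc. The notation $a_n\asymp b_n$ means there is a constant $C>0$ (not depending on $n$) with $\frac1C b_n\le a_n\le Cb_n$ for all $n$. *)

(* Defs.v *)
From HB Require Import structures.
From mathcomp Require Import all_boot all_order all_algebra all_fingroup.
From mathcomp Require Import all_classical all_reals.
From mathcomp Require Import topology normedtype sequences exp.
Set Implicit Arguments. Unset Strict Implicit. Unset Printing Implicit Defensive.
Import Order.TTheory GRing.Theory Num.Theory.
Import numFieldNormedType.Exports.
Local Open Scope ring_scope.

Section Interchange.
Variable R : realType.

(* E = unordered pairs of distinct vertices of V = 'I_n, encoded as (x,y) with x < y *)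
Definition edge (n : nat) := {e : 'I_n * 'I_n | (nat_of_ord e.1 < nat_of_ord e.2)%N}.

Definition tperm_e (n : nat) (e : edge n) : 'S_n := tperm (val e).1 (val e).2.

(* time-ordered composition of a word of transpositions: the i-th transposition
   acts i-th (mathcomp's s * t applies s first, then t) *)
Definition comp_word (n k : nat) (w : {ffun 'I_k -> edge n}) : 'S_n :=
  (\prod_(i < k) tperm_e (w i))%g.

(* Law of sigma(omega): the superposition of the |E| independent rate-1 Poisson
   processes on [0, t], t = beta/n, has N ~ Poisson(|E| t) points carrying i.i.d.
   uniform edge marks, so a given time-ordered word w in E^k has probability
   e^{-|E| t} t^k / k!. *)
Definition Psigma (n : nat) (beta : R) (pi : 'S_n) : R :=
  let t := beta / n%:R in
  limn (fun N => \sum_(k < N)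
     (expR (- (#|{: edge n}|%:R * t)) * t ^+ k / (k`!)%:R
      * #|[set w : {ffun 'I_k -> edge n} | comp_word w == pi]|%:R)).

(* number of cycles (fixed points included) *)
Definition ncycles (n : nat) (pi : 'S_n) : nat := #|porbits pi|.

Definition Zn (theta n : nat) (beta : R) : R :=
  \sum_(pi : 'S_n) Psigma beta pi * (theta%:R) ^+ (ncycles pi).

Definition Znh (theta n : nat) (beta h : R) : R :=
  expR (- (h / theta%:R) * n%:R) *
  \sum_(pi : 'S_n) Psigma beta pi *
     \prod_(g in porbits pi) (expR (h * (#|g|)%:R) + theta%:R - 1).

(* partitions lambda = (lambda_1,...,lambda_theta), encoded as functions
   'I_theta -> 'I_(n.+1); lam l j is lambda_{j+1} (0-indexed), 0 if j >= theta *)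
Definition lam (theta n : nat) (l : {ffun 'I_theta -> 'I_n.+1}) (j : nat) : nat :=
  nth 0 [seq val (l i) | i <- enum 'I_theta] j.

Definition is_partition (theta n : nat) (l : {ffun 'I_theta -> 'I_n.+1}) : bool :=
  (\sum_(i < theta) lam l i == n)%N &&
  [forall i : 'I_theta, forall j : 'I_theta, (i <= j)%N ==> (lam l j <= lam l i)%N].

Definition multinom (theta n : nat) (l : {ffun 'I_theta -> 'I_n.+1}) : R :=
  (n`!)%:R / \prod_(i < theta) ((lam l i)`!)%:R.

Definition inblock (theta n : nat) (l : {ffun 'I_theta -> 'I_n.+1}) (j x : nat) : bool :=
  ((\sum_(i < theta | (i < j)%N) lam l i <= x)%N &&
   (x < \sum_(i < theta | (i <= j)%N) lam l i)%N).

Definition in_young (theta n : nat) (l : {ffun 'I_theta -> 'I_n.+1}) (pi : 'S_n) : bool :=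
  [forall x : 'I_n, forall j : 'I_theta, inblock l j x == inblock l j (pi x)].

Definition Gn (theta n : nat) (beta : R) (l : {ffun 'I_theta -> 'I_n.+1}) : R :=
  multinom l * \sum_(pi : 'S_n | in_young l pi) Psigma beta pi.

End Interchange.

(* Main.v *)
Require Import Defs.
From HB Require Import structures.
From mathcomp Require Import all_boot all_order all_algebra all_fingroup.
From mathcomp Require Import all_classical all_reals.
From mathcomp Require Import topology normedtype sequences exp.
From mathcomp Require Import zify.
Set Implicit Arguments. Unset Strict Implicit. Unset Printing Implicit Defensive.
Import Order.TTheory GRing.Theory Num.Theory.
Import numFieldNormedType.Exports.
Local Open Scope ring_scope.

Lemma sum_count_mem (T : finType) (s : seq T) :
  (\sum_(y : T) count_mem y s)%N = size s.
Proof.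
elim: s => [|x s IH] /=; first by rewrite big1.
rewrite big_split /= IH (bigD1 x) //= eqxx big1 ?addn0 // => y /negPf.
by rewrite eq_sym => ->.
Qed.

Lemma card_tuple_cons (T : finType) n (P : pred (n.+1.-tuple T)) :
  #|[set c | P c]| = (\sum_(y : T) #|[set c : n.-tuple T | P [tuple of y :: c]]|)%N.
Proof.
rewrite -sum1dep_card.
transitivity (\sum_(y : T) \sum_(c : n.-tuple T | P [tuple of y :: c]) 1)%N; last first.
  by apply: eq_bigr => y _; rewrite sum1dep_card.
rewrite pair_big_dep /=.
rewrite (reindex (fun p : T * n.-tuple T => [tuple of p.1 :: p.2])) /=; last first.
  exists (fun c : n.+1.-tuple T => (thead c, [tuple of behead c])).
    by move=> [y c] _ /=; congr (_, _); apply: val_inj.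
  by move=> c _; apply: val_inj => /=; rewrite [in RHS](tuple_eta c).
by apply: eq_bigl => -[y c].
Qed.

Lemma card_perm_eq (T : finType) n (s : seq T) : size s = n ->
  (#|[set c : n.-tuple T | perm_eq c s]| * \prod_(j : T) (count_mem j s)`!)%N = n`!.
Proof.
elim: n s => [|n IH] s Hs.
  have -> : s = [::] by case: s Hs.
  rewrite big1 // muln1.
  rewrite (_ : [set c : 0.-tuple T | perm_eq c [::]] = [set [tuple]]) ?cards1 //.
  by apply/setP => c; rewrite !inE [c]tuple0 eqxx.
rewrite card_tuple_cons big_distrl /=.
have E : forall y, (#|[set c : n.-tuple T | perm_eq [tuple of y :: c] s]| *
     \prod_(j : T) (count_mem j s)`!)%N = (count_mem y s * n`!)%N.
  move=> y; have [ys|yns] := boolP (y \in s); last first.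
    rewrite (count_memPn yns) mul0n; apply/eqP; rewrite muln_eq0; apply/orP; left.
    rewrite cards_eq0; apply/eqP/setP => c; rewrite !inE.
    apply/negP => /perm_mem /(_ y); rewrite inE eqxx /= => H.
    by rewrite -H in yns.
  have Hr : size (rem y s) = n by rewrite size_rem // Hs.
  have Cr : forall j, count_mem j s = ((y == j) + count_mem j (rem y s))%N.
    by move=> j; have /seq.permP -> := perm_to_rem ys.
  rewrite -(IH _ Hr) mulnCA; congr (_ * _)%N.
    apply: eq_card => c; rewrite !inE.
    by rewrite (permPr (perm_to_rem ys)) /= perm_cons.
  rewrite (bigD1 y) //= [in RHS](bigD1 y) //= mulnA; congr (_ * _)%N.
    by rewrite Cr eqxx add1n factS.
  by apply: eq_bigr => j /negPf Hj; rewrite Cr eq_sym Hj.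
under eq_bigr do rewrite E.
by rewrite -big_distrl /= sum_count_mem Hs factS mulnC.
Qed.

Definition stab n k (c : n.-tuple 'I_k) (p : 'S_n) : bool :=
  [forall i, tnth c (p i) == tnth c i].

Lemma stab_iter n k (c : n.-tuple 'I_k) (p : 'S_n) :
  stab c p -> forall m i, tnth c ((p ^+ m)%g i) = tnth c i.
Proof.
move=> /forallP H; elim=> [|m IH] i; first by rewrite expg0 perm1.
by rewrite expgSr permM (eqP (H _)) IH.
Qed.

Lemma cycle_sum (R : comNzRingType) n k (j0 : 'I_k) (w : 'I_k -> R) (p : 'S_n) :
  \prod_(g in porbits p) \sum_(j < k) w j ^+ #|g| =
  \sum_(c : n.-tuple 'I_k | stab c p) \prod_(i < n) w (tnth c i).
Proof.
rewrite (big_distr_big j0) /=.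
pose h (f : {ffun {set 'I_n} -> 'I_k}) := [tuple f (porbit p i) | i < n].
pose h' (c : n.-tuple 'I_k) := [ffun g : {set 'I_n} =>
   if g \in porbits p then odflt j0 (omap (tnth c) [pick x in g]) else j0].
have hh' : forall c, stab c p -> h (h' c) = c.
  move=> c Hc; apply: eq_from_tnth => i; rewrite tnth_mktuple ffunE.
  rewrite (imset_f (porbit p)) //=.
  case: pickP => [x Hx|/(_ i)]; last by rewrite porbit_id.
  by have /porbitP[m ->] := Hx; rewrite /= stab_iter.
rewrite (reindex_onto h h' hh').
symmetry; apply: eq_big => f.
  have -> : stab (h f) p.
    apply/forallP => i; rewrite !tnth_mktuple.
    by rewrite (_ : p i = (p ^+ 1)%g i) ?porbit_perm ?expg1.
  rewrite /=; apply/eqP/idP => [Hf|Hf].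
    apply/pffun_onP; split; last by move=> ? _.
    apply/fintype.subsetP => g; rewrite inE; apply: contraR => Hg.
    by rewrite -Hf ffunE (negPf Hg).
  apply/ffunP => g; rewrite ffunE; case: ifP => Hg.
    case/imsetP: Hg => y _ ->.
    case: pickP => [x Hx|/(_ y)]; last by rewrite porbit_id.
    by rewrite /= tnth_mktuple; apply/congr1/eqP; rewrite eq_porbit_mem.
  case/pffun_onP: Hf => /fintype.subsetP Hs _.
  by apply/eqP; rewrite eq_sym; apply: contraFT Hg => Hn; apply: Hs; rewrite inE.
move=> _.
rewrite (partition_big (porbit p) (mem (porbits p))) /=; last first.
  by move=> i _; rewrite (imset_f (porbit p)).
apply: eq_bigr => g Hg.
rewrite (eq_bigr (fun _ => w (f g))); last first.
  by move=> i /eqP <-; rewrite tnth_mktuple.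
rewrite prodr_const; congr (_ ^+ _).
case/imsetP: Hg => y _ ->; apply: eq_card => i.
 by rewrite -eq_porbit_mem. 
Qed.

Section Stab.
Variables (R : numDomainType) (n k : nat) (P : 'S_n -> R).
Hypothesis Pconj : forall p t : 'S_n, P (p ^ t)%g = P p.

Definition Qs (c : n.-tuple 'I_k) := \sum_(p | stab c p) P p.

Lemma Qs_perm (c : n.-tuple 'I_k) (t : 'S_n) :
  Qs [tuple tnth c (t i) | i < n] = Qs c.
Proof.
rewrite /Qs [in RHS](reindex_inj (@conjg_inj _ t)) /=.
apply: eq_big => p; last by move=> _; rewrite Pconj.
apply/forallP/forallP => H i.
  by rewrite -(permKV t i) permJ; have := H (t^-1 i)%g; rewrite !tnth_mktuple permKV.
by have := H (t i); rewrite !tnth_mktuple permJ.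
Qed.

Lemma Qs_perm_eq (c d : n.-tuple 'I_k) : perm_eq c d -> Qs c = Qs d.
Proof.
case/tuple_permP => t Ht.
by rewrite -(Qs_perm d t); congr Qs; apply: val_inj; rewrite /= Ht.
Qed.

Lemma Qs_relabel (c : n.-tuple 'I_k) (r : 'S_k) :
  Qs [tuple r (tnth c i) | i < n] = Qs c.
Proof.
apply: eq_bigl => p; apply/forallP/forallP => H i; have := H i;
  by rewrite !tnth_mktuple ?(inj_eq perm_inj).
Qed.

End Stab.



Section Part.
Variables (th n : nat) (j0 : 'I_th).
Implicit Types (l : {ffun 'I_th -> 'I_n.+1}) (c : n.-tuple 'I_th).

Lemma lamE l (i : 'I_th) : lam l i = l i.
Proof.
rewrite /lam (nth_map j0) ?size_enum_ord //.
by rewrite nth_ord_enum.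
Qed.

Definition Sf l (j : nat) := (\sum_(i < th | (i < j)%N) lam l i)%N.

Lemma Sf0 l : Sf l 0 = 0%N.
Proof. by rewrite /Sf big_pred0. Qed.

Lemma Sf_le l j j' : (j <= j')%N -> (Sf l j <= Sf l j')%N.
Proof.
move=> le; rewrite /Sf !(big_mkcond (fun i : 'I_th => (i < _)%N)) /=.
apply: leq_sum => i _; case: ifP => // H.
by rewrite (leq_trans H le).
Qed.

Lemma SfS l (j : 'I_th) : Sf l j.+1 = (Sf l j + lam l j)%N.
Proof.
rewrite /Sf (bigD1 j) //= addnC; congr (_ + _)%N.
by apply: eq_bigl => i; rewrite ltnS leq_eqVlt -val_eqE /= andb_orl andbN /= andb_idr // => /ltn_eqF ->.
Qed.

Lemma Sf_big l j : (th <= j)%N -> is_partition l -> Sf l j = n.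
Proof.
move=> le /andP[/eqP Hs _]; rewrite /Sf -[X in _ = X]Hs.
by apply: eq_bigl => i; rewrite (leq_trans (ltn_ord i) le).
Qed.

Lemma inblockE l (j : nat) x : inblock l j x = (Sf l j <= x < Sf l j.+1)%N.
Proof. by []. Qed.

Lemma inblock_ex l (x : 'I_n) : is_partition l -> exists j : 'I_th, inblock l j x.
Proof.
move=> Hl.
have exP : exists m, (x < Sf l m.+1)%N.
  by exists th; rewrite Sf_big.
case: (ex_minnP exP) => m Hm minm.
have mth : (m < th)%N.
  have th0 : (0 < th)%N by case: (th) j0 => [[]|].
  have := minm th.-1; rewrite prednK // Sf_big // => /(_ (ltn_ord x)) H.
  by rewrite (leq_ltn_trans H) // ltn_predL.
exists (Ordinal mth); rewrite inblockE /= Hm andbT.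
case: m Hm minm mth => [|m] Hm minm mth; first by rewrite Sf0.
by rewrite leqNgt; apply/negP => /minm; rewrite ltnn.
Qed.

Lemma inblock_uniq l (x : nat) (j j' : 'I_th) :
  inblock l j x -> inblock l j' x -> j = j'.
Proof.
have key : forall a b : 'I_th, (a < b)%N -> inblock l a x -> inblock l b x -> False.
  move=> a b ab; rewrite !inblockE => /andP[_ h1] /andP[h2 _].
  by have := leq_ltn_trans (leq_trans (Sf_le l ab) h2) h1; rewrite ltnn.
move=> H1 H2; case: (ltngtP j j') => [lt|lt|/val_inj //].
  by case: (key _ _ lt H1 H2).
by case: (key _ _ lt H2 H1).
Qed.

Definition cl l : n.-tuple 'I_th :=
  [tuple odflt j0 [pick j : 'I_th | inblock l j i] | i < n].

Lemma inblock_cl l (x : 'I_n) (j : 'I_th) : is_partition l ->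
  inblock l j x = (tnth (cl l) x == j).
Proof.
move=> Hl; rewrite tnth_mktuple.
case: pickP => [k Hk|H]; last by case: (inblock_ex x Hl) => k; rewrite H.
apply/idP/eqP => [Hj|<-//]; exact: (inblock_uniq Hk Hj).
Qed.

Lemma young_stab l (p : 'S_n) : is_partition l -> in_young l p = stab (cl l) p.
Proof.
move=> Hl; apply/forallP/forallP => H x.
  have := H x => /forallP /(_ (tnth (cl l) x)).
  by rewrite !inblock_cl // eqxx eq_sym => /eqP.
apply/forallP => j; apply/eqP; rewrite !inblock_cl //.
by rewrite (eqP (H x)).
Qed.

Lemma sum_interval (a b m : nat) : (a <= b)%N -> (b <= m)%N ->
  (\sum_(i < m) ((a <= i) && (i < b)))%N = (b - a)%N.
Proof.
rewrite -(big_mkord xpredT (fun i => nat_of_bool ((a <= i)%N && (i < b)%N))).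
elim: m b => [|m IH] b ab bm; first by rewrite big_geq //; lia.
rewrite big_nat_recr //=.
case: (leqP b m) => bm'.
  by rewrite IH // andbF addn0.
have -> : b = m.+1 by lia.
rewrite andbT.
case: (leqP a m) => am /=.
  have -> : (\sum_(0 <= i < m) ((a <= i) && (i < m.+1)))%N = (\sum_(0 <= i < m) ((a <= i) && (i < m)))%N.
    by rewrite big_nat_cond [RHS]big_nat_cond; apply: eq_bigr => i /andP[/andP[_ h] _]; rewrite h ltnS (ltnW h).
  rewrite IH //; lia.
rewrite big1_seq /=; first by lia.
by move=> i; rewrite mem_index_iota => /andP[_ h]; rewrite leqNgt (ltn_trans h am).
Qed.

Lemma count_tuple (T : eqType) (t : n.-tuple T) (p : pred T) :
  count p t = (\sum_(i < n) p (tnth t i))%N.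
Proof.
rewrite -sum1_count big_tuple big_mkcond /=.
by apply: eq_bigr => i _; case: (p _).
Qed.

Lemma count_cl l (j : 'I_th) : is_partition l -> count_mem j (cl l) = lam l j.
Proof.
move=> Hl; rewrite count_tuple.
rewrite (eq_bigr (fun i : 'I_n => nat_of_bool ((Sf l j <= i)%N && (i < Sf l j.+1)%N))); last first.
  by move=> i _; rewrite /= -inblock_cl. 
rewrite sum_interval; first by rewrite SfS; lia.
  by apply: Sf_le.
by rewrite -(@Sf_big l th (leqnn th) Hl) Sf_le.
Qed.

End Part.

Lemma geq_tr : transitive geq.
Proof. by move=> y x z /= h1 h2; exact: leq_trans h2 h1. Qed.
Lemma geq_tot : total geq.
Proof. by move=> x y /=; rewrite orbC leq_total. Qed.
Lemma geq_anti : antisymmetric geq.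
Proof. by move=> x y /= h; apply: anti_leq; rewrite andbC. Qed.
Lemma geq_rfl : reflexive geq.
Proof. by move=> x /=. Qed.

Lemma counts_perm (T : eqType) (s1 s2 : seq T) :
  (forall x, count_mem x s1 = count_mem x s2) -> perm_eq s1 s2.
Proof. by move=> H; apply/allP => x _ /=; rewrite H. Qed.

Section Key.
Variables (th n : nat) (j0 : 'I_th).
Implicit Types (l : {ffun 'I_th -> 'I_n.+1}) (c d : n.-tuple 'I_th).

Definition ls l : seq nat := [seq val (l i) | i <- enum 'I_th].
Definition cnt c : seq nat := [seq count_mem j c | j <- enum 'I_th].
Definition key c := sort geq (cnt c).
Definition lof c : {ffun 'I_th -> 'I_n.+1} := [ffun i : 'I_th => inord (nth 0%N (key c) i)].
Definition rl (r : 'S_th) l : n.-tuple 'I_th := [tuple r (tnth (cl j0 l) i) | i < n].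

Lemma size_key c : size (key c) = th.
Proof. by rewrite size_sort size_map size_enum_ord. Qed.

Lemma key_le c x : x \in key c -> (x <= n)%N.
Proof.
rewrite (perm_mem (permEl (perm_sort _ _))) => /mapP[j _ ->].
by rewrite -[X in (_ <= X)%N](size_tuple c) count_size.
Qed.

Lemma ls_lof c : ls (lof c) = key c.
Proof.
rewrite /ls (eq_map (g := fun i : 'I_th => nth 0%N (key c) i)); last first.
  move=> i; rewrite ffunE /= inordK // ltnS; apply: (@key_le c).
  by rewrite mem_nth // size_key.
rewrite (map_comp (nth 0%N (key c)) val) val_enum_ord.
by rewrite -(size_key c) -/(mkseq _ _) mkseq_nth.
Qed.

Lemma ls_inj l l' : ls l = ls l' -> l = l'.
Proof.
move=> H; apply/ffunP => i; apply: val_inj.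
change (nat_of_ord (l i) = nat_of_ord (l' i)).
by rewrite -!(lamE j0) /lam -/(ls l) -/(ls l') H.
Qed.

Lemma sorted_ls l : is_partition l -> sorted geq (ls l).
Proof.
case/andP=> _ /forallP H; apply/(sortedP 0%N) => i.
rewrite size_map size_enum_ord => hi /=.
have hi' : (i < th)%N by apply: ltn_trans hi.
have := H (Ordinal hi') => /forallP /(_ (Ordinal hi)) /implyP /(_ (leqnSn _)).
by [].
Qed.

Lemma cnt_cl l : is_partition l -> cnt (cl j0 l) = ls l.
Proof.
move=> Hl; apply: eq_map => j.
by rewrite count_cl // lamE.
Qed.

Lemma key_cl l : is_partition l -> key (cl j0 l) = ls l.
Proof.
by move=> Hl; rewrite /key cnt_cl // sorted_sort //; [exact: geq_tr | exact: sorted_ls].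
Qed.

Lemma part_lof c : is_partition (lof c).
Proof.
have E : forall i, lam (lof c) i = nth 0%N (key c) i.
  by move=> i; rewrite /lam -/(ls (lof c)) ls_lof.
apply/andP; split.
  under eq_bigr do rewrite E.
  rewrite -(big_mkord xpredT (fun i => nth 0%N (key c) i)) -{1}(size_key c).
  rewrite -(big_nth 0%N xpredT (fun x => x)) (perm_big _ (permEl (perm_sort _ _))) /=.
  by rewrite big_map big_enum /= sum_count_mem size_tuple.
apply/forallP => i; apply/forallP => j; apply/implyP => ij.
rewrite !E; apply: (sorted_leq_nth geq_tr geq_rfl 0%N (sort_sorted geq_tot _)) => //.
  by rewrite inE size_key.
by rewrite inE size_key.
Qed.

Lemma lof_eq c l : is_partition l -> (lof c == l) = (key c == ls l).
Proof.
move=> Hl; apply/eqP/eqP => [<-|H]; first by rewrite ls_lof.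
by apply: ls_inj; rewrite ls_lof.
Qed.

Lemma key_perm c d : perm_eq c d -> key c = key d.
Proof.
move=> /seq.permP H; rewrite /key /cnt; congr sort.
by apply: eq_map => j; rewrite H.
Qed.

Lemma count_rl (r : 'S_th) l (i : 'I_th) :
  count_mem (r i) (rl r l) = count_mem i (cl j0 l).
Proof.
rewrite !count_tuple; apply: eq_bigr => x _.
by rewrite tnth_mktuple /= (inj_eq perm_inj).
Qed.

Lemma key_rl (r : 'S_th) l : is_partition l -> key (rl r l) = ls l.
Proof.
move=> Hl.
have P1 : perm_eq (cnt (rl r l)) (ls l).
  have -> : cnt (rl r l) = [seq val (l i) | i <- [seq (r^-1)%g j | j <- enum 'I_th]].
    rewrite -map_comp; apply: eq_map => j /=.
    by rewrite -{1}(permKV r j) count_rl count_cl // lamE.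
  apply: perm_map; apply: uniq_perm.
  - by rewrite map_inj_uniq ?enum_uniq //; apply: perm_inj.
  - exact: enum_uniq.
  - by move=> x; rewrite mem_enum -{1}(permK r x) map_f ?mem_enum.
rewrite /key; have /(perm_sortP geq_tot geq_tr geq_anti) -> := P1.
by rewrite sorted_sort //; [exact: geq_tr | exact: sorted_ls].
Qed.

Lemma exists_rho c l : is_partition l -> key c = ls l ->
  exists r : 'S_th, perm_eq c (rl r l).
Proof.
move=> Hl Hk.
pose ct : th.-tuple nat := [tuple count_mem j c | j < th].
have P1 : perm_eq (ls l) ct.
  by rewrite -Hk /key perm_sort; apply: perm_refl.
case/tuple_permP: P1 => r Hr; exists r.
have Hi : forall i : 'I_th, lam l i = count_mem (r i) c.
  move=> i; rewrite /lam -/(ls l) Hr.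
  by rewrite -(tnth_nth 0%N) !tnth_mktuple.
apply: counts_perm => y.
by rewrite -(permKV r y) count_rl count_cl // Hi.
Qed.

End Key.

Lemma ler_sum_sub (R : numDomainType) (I : finType) (P1 P2 : pred I) (F : I -> R) :
  (forall i, P1 i -> P2 i) -> (forall i, 0 <= F i) ->
  \sum_(i | P1 i) F i <= \sum_(i | P2 i) F i.
Proof.
move=> H F0; rewrite [X in X <= _]big_mkcond [X in _ <= X]big_mkcond /=.
apply: ler_sum => i _; case: ifP => [/H ->//|_]; case: ifP => // _.
Qed.

Section Main.
Variables (R : numFieldType) (th n : nat) (j0 : 'I_th) (P : 'S_n -> R) (w : 'I_th -> R).
Hypothesis Pconj : forall p t : 'S_n, P (p ^ t)%g = P p.
Hypothesis P0 : forall p, 0 <= P p.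
Hypothesis w0 : forall j, 0 <= w j.
Implicit Types (c d : n.-tuple 'I_th) (l : {ffun 'I_th -> 'I_n.+1}).

Definition Wt (c : n.-tuple 'I_th) := \prod_(i < n) w (tnth c i).
Definition mult (l : {ffun 'I_th -> 'I_n.+1}) : R :=
  (n`!)%:R / \prod_(i < th) ((lam l i)`!)%:R.

Lemma Wt_ge0 c : 0 <= Wt c.
Proof. by apply: prodr_ge0 => i _. Qed.

Lemma Wt_perm c d : perm_eq c d -> Wt c = Wt d.
Proof.
by move=> H; rewrite /Wt -!(big_tuple _ _ _ xpredT w) (perm_big _ H).
Qed.

Lemma Q_ge0 c : 0 <= Qs P c.
Proof. by apply: sumr_ge0 => p _. Qed.

Lemma card_class (r : 'S_th) l : is_partition l ->
  (#|[set c : n.-tuple 'I_th | perm_eq c (rl j0 r l)]|)%:R = mult l.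
Proof.
move=> Hl.
have H := card_perm_eq (size_tuple (rl j0 r l)).
have E : (\prod_(j : 'I_th) (count_mem j (rl j0 r l))`!)%N = (\prod_(i < th) (lam l i)`!)%N.
  rewrite (reindex_inj (@perm_inj _ r)) /=.
  by apply: eq_bigr => i _; rewrite count_rl count_cl.
rewrite E in H.
have D0 : ((\prod_(i < th) (lam l i)`!)%N%:R : R) != 0.
  by rewrite pnatr_eq0 -lt0n prodn_gt0 // => i; exact: fact_gt0.
by rewrite /mult -natr_prod -H natrM mulfK.
Qed.

Lemma sum_class (r : 'S_th) l (F : n.-tuple 'I_th -> R) (a : R) :
  is_partition l -> (forall c, perm_eq c (rl j0 r l) -> F c = a) ->
  \sum_(c : n.-tuple 'I_th | perm_eq c (rl j0 r l)) F c = mult l * a.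
Proof.
move=> Hl HF; rewrite (eq_bigr (fun _ => a)) //.
rewrite (eq_bigl (mem [set c : n.-tuple 'I_th | perm_eq c (rl j0 r l)])); last first.
  by move=> c; rewrite !inE.
by rewrite sumr_const -(card_class r Hl) mulr_natl.
Qed.

Theorem main_bound (V : {ffun 'I_th -> 'I_n.+1} -> R) :
  (forall l, is_partition l -> forall r, Wt (rl j0 r l) <= V l) ->
  (forall l, is_partition l -> exists r, Wt (rl j0 r l) = V l) ->
  let Z := \sum_(p : 'S_n) P p * \prod_(g in porbits p) \sum_(j < th) w j ^+ #|g| in
  let S := \sum_(l | is_partition l) V l * (mult l * \sum_(p | in_young l p) P p) in
  S <= Z /\ Z <= (th`!)%:R * S.
Proof.
move=> HV1 HV2 Z S.
have EZ0 : Z = \sum_(c : n.-tuple 'I_th) Wt c * Qs P c.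
  rewrite /Z; under eq_bigr do rewrite (cycle_sum j0) mulr_sumr.
  rewrite (exchange_big_dep xpredT) //=.
  apply: eq_bigr => c _; rewrite /Qs mulr_sumr.
  by apply: eq_bigr => p _; rewrite mulrC.
have EZ : Z = \sum_(l | is_partition l) \sum_(c : n.-tuple 'I_th | lof c == l) Wt c * Qs P c.
  rewrite EZ0 (partition_big (lof (n:=n)) (fun l => is_partition l)) //=.
  by move=> c _; exact: part_lof.
have FQ : forall l c, is_partition l -> lof c == l -> Qs P c = Qs P (cl j0 l).
  move=> l c Hl; rewrite lof_eq // => /eqP Hk.
  case: (exists_rho j0 Hl Hk) => r Hr.
  by rewrite (Qs_perm_eq Pconj Hr) /rl Qs_relabel.
have ES : S = \sum_(l | is_partition l) V l * (mult l * Qs P (cl j0 l)).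
  apply: eq_bigr => l Hl; congr (_ * (_ * _)).
  by apply: eq_bigl => p; rewrite (young_stab j0).
have cls : forall l r c, is_partition l -> perm_eq c (rl j0 r l) -> lof c == l.
  by move=> l r c Hl Hc; rewrite lof_eq // (key_perm Hc) key_rl.
have mult_ge0 : forall l, 0 <= mult l.
  by move=> l; apply: divr_ge0; [exact: ler0n | apply: prodr_ge0 => i _; exact: ler0n].
rewrite EZ ES; split.
  apply: ler_sum => l Hl.
  case: (HV2 l Hl) => r0 Hr0.
  apply: le_trans (ler_sum_sub (P1 := fun c => perm_eq c (rl j0 r0 l)) _ _); last first.
  - by move=> c; rewrite mulr_ge0 ?Wt_ge0 ?Q_ge0.
  - by move=> c Hc; exact: cls Hc.
  rewrite (sum_class (a := V l * Qs P (cl j0 l))) //.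
    by rewrite mulrCA.
  move=> c Hc; rewrite (FQ l c Hl (cls _ _ _ Hl Hc)) -Hr0.
  by rewrite (Wt_perm Hc).
rewrite mulr_sumr; apply: ler_sum => l Hl.
apply: le_trans (_ : \sum_(r : 'S_th) \sum_(c : n.-tuple 'I_th | perm_eq c (rl j0 r l)) Wt c * Qs P c <= _).
  rewrite [X in X <= _]big_mkcond /=.
  rewrite (eq_bigr (fun r => \sum_(c : n.-tuple 'I_th) (if perm_eq c (rl j0 r l) then Wt c * Qs P c else 0))); last by move=> r _; rewrite big_mkcond.
  rewrite exchange_big /=.
  apply: ler_sum => c _.
  case: ifP => Hc; last first.
    by apply: sumr_ge0 => r _; case: ifP => // _; rewrite mulr_ge0 ?Wt_ge0 ?Q_ge0.
  move: (Hc); rewrite lof_eq // => /eqP Hk.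
  case: (exists_rho j0 Hl Hk) => r Hr.
  rewrite (bigD1 r) //= Hr ler_wpDr //.
  by apply: sumr_ge0 => r' _; case: ifP => // _; rewrite mulr_ge0 ?Wt_ge0 ?Q_ge0.
rewrite -(card_Sn th) mulr_natl -sumr_const.
apply: ler_sum => r _.
rewrite (sum_class (a := Wt (rl j0 r l) * Qs P (cl j0 l))) //; last first.
  by move=> c Hc; rewrite (FQ l c Hl (cls _ _ _ Hl Hc)) (Wt_perm Hc).
rewrite mulrCA; apply: ler_wpM2r; last exact: HV1.
by rewrite mulr_ge0 ?mult_ge0 ?Q_ge0.
Qed.

End Main.

Definition cp n (t : 'S_n) (p : 'I_n * 'I_n) : 'I_n * 'I_n :=
  if (t p.1 < t p.2)%N then (t p.1, t p.2) else (t p.2, t p.1).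

Definition ce_pair n (t : 'S_n) (e : edge n) : 'I_n * 'I_n := cp t (val e).

Lemma cpK n (t : 'S_n) (a b : 'I_n) : (a < b)%N -> cp t^-1 (cp t (a, b)) = (a, b).
Proof.
move=> ab; rewrite [cp t _]/cp /=.
case: ifP => H; rewrite /cp /= !permK.
  by rewrite ab.
by rewrite ltnNge (ltnW ab).
Qed.

Lemma ce_proof n (t : 'S_n) (e : edge n) :
  (nat_of_ord (ce_pair t e).1 < nat_of_ord (ce_pair t e).2)%N.
Proof.
rewrite /ce_pair /cp; case: ifP => //= H.
have ne : t (val e).1 != t (val e).2.
  rewrite (inj_eq perm_inj); apply/eqP => E.
  by have := valP e; rewrite /= E ltnn.
rewrite ltn_neqAle leqNgt H andbT; apply: contra ne => /eqP E.
by apply/eqP/val_inj; exact: esym E.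
Qed.

Definition conj_e n (t : 'S_n) (e : edge n) : edge n := exist _ (ce_pair t e) (ce_proof t e).

Lemma conj_eK n (t : 'S_n) : cancel (conj_e t) (conj_e t^-1).
Proof.
move=> e; apply: val_inj.
rewrite /= /ce_pair /=.
case: e => [[a b] /= ab].
exact: cpK.
Qed.

Lemma tperm_conj_e n (t : 'S_n) (e : edge n) :
  tperm_e (conj_e t e) = ((tperm_e e) ^ t)%g.
Proof.
rewrite /tperm_e tpermJ /= /ce_pair /cp.
by case: ifP => _ //=; rewrite tpermC.
Qed.

Lemma card_word_le n k (t : 'S_n) (pi : 'S_n) :
  (#|[set w : {ffun 'I_k -> edge n} | comp_word w == pi]| <=
   #|[set w : {ffun 'I_k -> edge n} | comp_word w == (pi ^ t)%g]|)%N.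
Proof.
pose f (w : {ffun 'I_k -> edge n}) : {ffun 'I_k -> edge n} := [ffun i => conj_e t (w i)].
have finj : injective f.
  move=> w1 w2 /ffunP E; apply/ffunP => i.
  by have := E i; rewrite !ffunE => /(can_inj (@conj_eK n t)).
rewrite -(card_imset _ finj); apply: subset_leq_card.
apply/fintype.subsetP => _ /imsetP[w Hw ->]; rewrite inE in Hw.
rewrite inE /comp_word.
rewrite (eq_bigr (fun i => ((tperm_e (w i)) ^ t)%g)); last first.
  by move=> i _; rewrite ffunE tperm_conj_e.
by rewrite -conjg_prod; rewrite -/(comp_word w) (eqP Hw).
Qed.

Lemma card_word_conj n k (t : 'S_n) (pi : 'S_n) :
  #|[set w : {ffun 'I_k -> edge n} | comp_word w == (pi ^ t)%g]| =
  #|[set w : {ffun 'I_k -> edge n} | comp_word w == pi]|.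
Proof.
apply/anti_leq; rewrite card_word_le andbT.
by have := card_word_le k t^-1 (pi ^ t)%g; rewrite conjgK.
Qed.

Lemma Psigma_conj (R : realType) n (beta : R) (pi t : 'S_n) :
  Psigma beta (pi ^ t)%g = Psigma beta pi.
Proof.
rewrite /Psigma /=; congr (lim ((_ @ \oo)%classic)); apply: boolp.funext => N.
by apply: eq_bigr => k _; rewrite card_word_conj.
Qed.

Lemma limn_ge0 (R : realType) (u : R^nat) : (forall n, 0 <= u n) -> 0 <= limn u.
Proof.
move=> u0; have [c|nc] := pselect (cvgn u).
  by apply: limr_ge => //; apply: nearW.
rewrite /lim /lim_in getPN //= => l ul; apply: nc; apply/cvg_ex; exists l; exact: ul.
Qed.

Lemma Psigma_ge0 (R : realType) n (beta : R) (pi : 'S_n) : 0 <= beta ->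
  0 <= Psigma beta pi.
Proof.
move=> b0; rewrite /Psigma; apply: limn_ge0 => N.
apply: sumr_ge0 => k _.
rewrite mulr_ge0 // divr_ge0 // mulr_ge0 ?expR_ge0 // exprn_ge0 //.
by rewrite divr_ge0.
Qed.


Lemma conclude (R : numFieldType) (C S Z : R) : 1 <= C -> 0 <= S -> S <= Z ->
  Z <= C * S -> S / C <= Z <= C * S.
Proof.
move=> C1 S0 SZ ZC; have Z0 := le_trans S0 SZ.
rewrite ZC andbT ler_pdivrMr ?(lt_le_trans ltr01 C1) //.
by apply: le_trans SZ _; apply: ler_peMr.
Qed.

Lemma Wt_ind (R : numFieldType) th n (j0 : 'I_th) (e : R) (c : n.-tuple 'I_th) :
  Wt (fun j => if j == j0 then e else 1) c = e ^+ count_mem j0 c.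
Proof.
rewrite count_tuple (big_morph (fun m => e ^+ m) (exprD e) (expr0 e)).
apply: eq_bigr => i _ /=; case: (tnth c i == j0) => //=.
Qed.

Lemma part_mono th n (l : {ffun 'I_th -> 'I_n.+1}) (i j : 'I_th) :
  is_partition l -> (i <= j)%N -> (lam l j <= lam l i)%N.
Proof.
case/andP=> _ /forallP H ij; have := H i => /forallP /(_ j) /implyP; exact.
Qed.

Lemma S_ge0 (R : realType) th n (beta : R) (V : {ffun 'I_th -> 'I_n.+1} -> R) :
  0 <= beta -> (forall l, 0 <= V l) ->
  0 <= \sum_(l | is_partition l) V l * (@mult R th n l * \sum_(p | in_young l p) Psigma beta p).
Proof.
move=> b0 V0; apply: sumr_ge0 => l _; rewrite mulr_ge0 // mulr_ge0 //.
  by apply: divr_ge0; [exact: ler0n | apply: prodr_ge0 => i _; exact: ler0n].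
by apply: sumr_ge0 => p _; exact: Psigma_ge0.
Qed.

Theorem lemma2p2 (R : realType) (theta : nat) (beta h : R)
  (Htheta : (2 <= theta)%N) (Hbeta : 0 < beta) :
  (exists C : R, 0 < C /\ forall n : nat,
     let S := \sum_(l : {ffun 'I_theta -> 'I_n.+1} | is_partition l) Gn beta l in
     S / C <= Zn theta n beta <= C * S) /\
  (0 < h -> exists C : R, 0 < C /\ forall n : nat,
     let S := \sum_(l : {ffun 'I_theta -> 'I_n.+1} | is_partition l)
                expR (h * (lam l 0)%:R) * Gn beta l in
     S / C <= expR ((h / theta%:R) * n%:R) * Znh theta n beta h <= C * S) /\
  (h < 0 -> exists C : R, 0 < C /\ forall n : nat,
     let S := \sum_(l : {ffun 'I_theta -> 'I_n.+1} | is_partition l)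
                expR (h * (lam l theta.-1)%:R) * Gn beta l in
     S / C <= expR ((h / theta%:R) * n%:R) * Znh theta n beta h <= C * S).
Proof.
have th0 : (0 < theta)%N by apply: leq_trans Htheta.
have thl : (theta.-1 < theta)%N by rewrite ltn_predL.
pose j0 : 'I_theta := Ordinal th0.
pose jl : 'I_theta := Ordinal thl.
have b0 : 0 <= beta by exact: ltW.
have C1 : 1 <= (theta`!)%:R :> R by rewrite ler1n fact_gt0.
have C0 : 0 < (theta`!)%:R :> R by rewrite ltr0n fact_gt0.
have Pc : forall n (p t : 'S_n), Psigma beta (p ^ t)%g = Psigma beta p.
  by move=> n p t; exact: Psigma_conj.
have P0 : forall n (p : 'S_n), 0 <= Psigma beta p.
  by move=> n p; exact: Psigma_ge0.
have EZh : forall n, expR ((h / theta%:R) * n%:R) * Znh theta n beta h =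
    \sum_(p : 'S_n) Psigma beta p * \prod_(g in porbits p)
        \sum_(j < theta) (if j == j0 then expR h else 1) ^+ #|g|.
  move=> n; rewrite /Znh mulNr expRN mulrA mulfV ?gt_eqF ?expR_gt0 // mul1r.
  apply: eq_bigr => p _; congr (_ * _); apply: eq_bigr => g _.
  rewrite (bigD1 j0) //= ?eqxx.
  rewrite (eq_bigr (fun _ => 1)); last by move=> j /negPf ->; exact: expr1n.
  rewrite sumr_const cardC1 card_ord expRM_natr.
  idtac.
  have -> : (theta%:R : R) = theta.-1%:R + 1 by rewrite natr1 prednK.
  by rewrite addrA addrK.
have Whrl : forall n (l : {ffun 'I_theta -> 'I_n.+1}) (r : 'S_theta), is_partition l ->
    Wt (fun j => if j == j0 then expR h else 1) (rl j0 r l) = expR h ^+ lam l (r^-1 j0)%g.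
  move=> n l r Hl; rewrite Wt_ind -{1}(permKV r j0) count_rl count_cl //.
have w0h : forall j : 'I_theta, 0 <= (if j == j0 then expR h else 1).
  by move=> j; case: ifP => _ //; exact: expR_ge0.
split; [|split].
- exists (theta`!)%:R; split => // n /=.
  have w01 : forall j : 'I_theta, 0 <= (fun _ : 'I_theta => (1:R)) j by move=> j; exact: ler01.
  have HV1 : forall l : {ffun 'I_theta -> 'I_n.+1}, is_partition l -> forall r : 'S_theta,
      Wt (fun _ => (1:R)) (rl j0 r l) <= (fun _ => (1:R)) l.
    by move=> l _ r; rewrite /Wt big1.
  have HV2 : forall l : {ffun 'I_theta -> 'I_n.+1}, is_partition l -> exists r : 'S_theta,
      Wt (fun _ => (1:R)) (rl j0 r l) = (fun _ => (1:R)) l.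
    by move=> l _; exists 1%g; rewrite /Wt big1.
  have := @main_bound R theta n j0 (Psigma beta) (fun _ => 1) (Pc n) (P0 n) w01 (fun _ => 1) HV1 HV2.
  move=> /= [H1 H2].
  have EZ : Zn theta n beta = \sum_(p : 'S_n) Psigma beta p *
       \prod_(g in porbits p) \sum_(j < theta) (1:R) ^+ #|g|.
    apply: eq_bigr => p _; congr (_ * _).
    rewrite (eq_bigr (fun _ => theta%:R)) ?prodr_const //.
    move=> g _; rewrite (eq_bigr (fun _ => 1)) ?sumr_const ?card_ord //.
    by move=> j _; exact: expr1n.
  have ES : \sum_(l : {ffun 'I_theta -> 'I_n.+1} | is_partition l) Gn beta l =
     \sum_(l | is_partition l) 1 * (@mult R theta n l * \sum_(p | in_young l p) Psigma beta p).
    by apply: eq_bigr => l _; rewrite mul1r.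
  rewrite EZ ES; apply: conclude => //.
  by apply: S_ge0 => // l; exact: ler01.
- move=> hpos; exists (theta`!)%:R; split => // n /=.
  pose V := fun l : {ffun 'I_theta -> 'I_n.+1} => expR (h * (lam l 0)%:R).
  have HV1 : forall l : {ffun 'I_theta -> 'I_n.+1}, is_partition l -> forall r : 'S_theta,
      Wt (fun j => if j == j0 then expR h else 1) (rl j0 r l) <= V l.
    move=> l Hl r; rewrite Whrl // /V expRM_natr.
    apply: ler_weXn2l; first by rewrite ltW // expR_gt1.
    exact: (@part_mono _ _ l j0).
  have HV2 : forall l : {ffun 'I_theta -> 'I_n.+1}, is_partition l -> exists r : 'S_theta,
      Wt (fun j => if j == j0 then expR h else 1) (rl j0 r l) = V l.
    by move=> l Hl; exists 1%g; rewrite Whrl // invg1 perm1 /V expRM_natr.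
  have := @main_bound R theta n j0 (Psigma beta) _ (Pc n) (P0 n) w0h V HV1 HV2.
  move=> /= [H1 H2].
  rewrite EZh; apply: conclude => //.
  by apply: S_ge0 => // l; exact: expR_ge0.
- move=> hneg; exists (theta`!)%:R; split => // n /=.
  pose V := fun l : {ffun 'I_theta -> 'I_n.+1} => expR (h * (lam l theta.-1)%:R).
  have HV1 : forall l : {ffun 'I_theta -> 'I_n.+1}, is_partition l -> forall r : 'S_theta,
      Wt (fun j => if j == j0 then expR h else 1) (rl j0 r l) <= V l.
    move=> l Hl r; rewrite Whrl // /V expRM_natr.
    apply: ler_wiXn2l; [exact: expR_ge0 | by rewrite expR_le1 ltW |].
    apply: (@part_mono _ _ l _ jl) => //=.
    by rewrite -ltnS prednK.
  have HV2 : forall l : {ffun 'I_theta -> 'I_n.+1}, is_partition l -> exists r : 'S_theta,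
      Wt (fun j => if j == j0 then expR h else 1) (rl j0 r l) = V l.
    move=> l Hl; exists (tperm j0 jl); rewrite Whrl // tpermV tpermL /V expRM_natr.
    by [].
  have := @main_bound R theta n j0 (Psigma beta) _ (Pc n) (P0 n) w0h V HV1 HV2.
  move=> /= [H1 H2].
  rewrite EZh; apply: conclude => //.
  by apply: S_ge0 => // l; exact: expR_ge0.
Qed.
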